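(* Let $n\ge1$, let $V$ be a real symmetric positive-semidefinite $2n\times2n$ matrix, let $H$ be a real symmetric positive-definite $2n\times 2n$ matrix, and let $G$ be either $SL(2n)$ or $Sp(2n)$. Then \[ \inf_{X\in G}\operatorname{tr}(XVX^TH)=\lim_{\epsilon\to0^+}\ \inf_{X\in G}\operatorname{tr}\big(X(V+\epsilon\mathbb{I}_{2n})X^TH\big). \]
   Context: $SL(2n)$ is the group of real $2n\times2n$ matrices of determinant $1$; $Sp(2n)=\{S\in\mathbb{R}^{2n\times 2n}: S^TJS=J\}$ with $J=\begin{bmatrix}0 & \mathbb{I}_n\\ -\mathbb{I}_n & 0\end{bmatrix}$. *)

(* Defs.v *)
From HB Require Import structures.
From mathcomp Require Import all_boot all_order all_algebra.
From mathcomp Require Import all_classical all_reals all_analysis.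
Set Implicit Arguments. Unset Strict Implicit. Unset Printing Implicit Defensive.
Import Order.TTheory GRing.Theory Num.Theory.
Local Open Scope ring_scope.
Local Open Scope classical_set_scope.

Section Defs.
Variable R : realType.

Definition psd_mx (m : nat) (A : 'M[R]_m) : Prop :=
  A^T = A /\ forall v : 'cV[R]_m, 0 <= (v^T *m A *m v) 0 0.

Definition pd_mx (m : nat) (A : 'M[R]_m) : Prop :=
  A^T = A /\ forall v : 'cV[R]_m, v != 0 -> 0 < (v^T *m A *m v) 0 0.

Definition Jmx (n : nat) : 'M[R]_(n + n) :=
  block_mx 0 1%:M (- 1%:M) 0.

Definition SL_set (n : nat) : set 'M[R]_(n + n) := [set X | \det X = 1].

Definition Sp_set (n : nat) : set 'M[R]_(n + n) :=
  [set X | X^T *m Jmx n *m X = Jmx n].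

End Defs.

Inductive group_choice := G_SL | G_Sp.

Definition G_set {R : realType} (g : group_choice) (n : nat) : set 'M[R]_(n + n) :=
  match g with G_SL => @SL_set R n | G_Sp => @Sp_set R n end.

Definition trace_inf {R : realType} (g : group_choice) (n : nat)
    (V H : 'M[R]_(n + n)) : R :=
  inf [set \tr (X *m V *m X^T *m H) | X in @G_set R g n].

(* Main.v *)
Require Import Defs.
From HB Require Import structures.
From mathcomp Require Import all_boot all_order all_algebra.
From mathcomp Require Import all_classical all_reals all_analysis.
From mathcomp Require Import ring lra.
Import Order.TTheory GRing.Theory Num.Theory.
Local Open Scope ring_scope.
Set Implicit Arguments. Unset Strict Implicit. Unset Printing Implicit Defensive.
Section LA.

Variable R : realFieldType.

Definition qf m (A : 'M[R]_m) (v : 'cV[R]_m) := (v^T *m A *m v) 0 0.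

Lemma qf_col m (A : 'M[R]_(1 + m)) (x : 'M[R]_1) (w : 'cV[R]_m) :
  qf A (col_mx x w) =
  ((x^T *m ulsubmx A *m x) + (w^T *m dlsubmx A *m x)
   + (x^T *m ursubmx A *m w) + (w^T *m drsubmx A *m w)) 0 0.
Proof.
rewrite /qf -{1}(submxK A) tr_col_mx mul_row_block mul_row_col !mulmxDl.
by rewrite !addrA.
Qed.

Lemma tr_pd m (V K : 'M[R]_m) :
  V^T = V -> (forall v, v != 0 -> 0 < qf V v) -> (forall v, 0 <= qf K v) ->
  0 <= \tr (V *m K).
Proof.
elim: m V K => [|m IH] V K.
  by move=> _ _ _; rewrite /mxtrace big_ord0.
move=> Vs Vpd Kpsd.
pose V' : 'M[R]_(1 + m) := V.
pose K' : 'M[R]_(1 + m) := K.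
pose a := ulsubmx V'. pose b := dlsubmx V'. pose C := drsubmx V'.
have Vur : ursubmx V' = b^T by rewrite /b trmx_dlsub Vs.
have Cs : C^T = C by rewrite /C trmx_drsub Vs.
pose al := a 0 0.
have aE : a = al%:M.
  by apply/matrixP => i j; rewrite !ord1 [RHS]mxE eqxx mulr1n.
have alpos : 0 < al.
  have nz : (col_mx 1%:M 0 : 'cV[R]_(1 + m)) != 0.
    rewrite col_mx_eq0 negb_and; apply/orP; left.
    by apply/eqP => /matrixP/(_ 0 0)/eqP; rewrite !mxE /= oner_eq0.
  have := Vpd _ nz.
  rewrite (qf_col V') trmx0 trmx1 !mulmx0 !mul0mx !addr0 mul1mx mulmx1.
  by rewrite -/a aE mxE eqxx mulr1n.
pose u : 'cV[R]_(1 + m) := col_mx a b.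
pose C' := C - al^-1 *: (b *m b^T).
have decV : V' = al^-1 *: (u *m u^T) + block_mx 0 0 0 C'.
  rewrite -{1}(submxK V') /u tr_col_mx mul_col_row scale_block_mx add_block_mx.
  rewrite Vur -/a -/b -/C aE !addr0 /C' addrCA subrr addr0.
  have hal : al != 0 by rewrite gt_eqF.
  congr block_mx.
  - by rewrite tr_scalar_mx mul_scalar_mx scale_scalar_mx scale_scalar_mx mulrA mulVf // mul1r.
  - by rewrite mul_scalar_mx scalerA mulVf // scale1r.
  - by rewrite tr_scalar_mx mul_mx_scalar scalerA mulVf // scale1r.
have -> : \tr (V *m K) = \tr (V' *m K') by [].
rewrite decV mulmxDl mxtraceD -scalemxAl mxtraceZ.
apply: addr_ge0.
  apply: mulr_ge0; first by rewrite invr_ge0 ltW.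
  rewrite -mulmxA mxtrace_mulC /mxtrace big_ord1.
  exact: Kpsd.
rewrite -(submxK K') mulmx_block mxtrace_block !mul0mx !add0r mxtrace0 add0r.
apply: IH.
- rewrite /C' raddfB /= linearZ /= trmx_mul trmxK Cs //.
- move=> w wn0.
  pose v : 'cV[R]_(1 + m) := col_mx (-(al^-1) *: (b^T *m w)) w.
  have vn0 : v != 0 by rewrite col_mx_eq0 negb_and wn0 orbT.
  have uv : u^T *m v = 0.
    rewrite /u /v tr_col_mx mul_row_col aE tr_scalar_mx mul_scalar_mx.
    by apply/matrixP => i j; rewrite !mxE mulNr mulrN mulrA mulfV ?gt_eqF // mul1r addNr.
  have := Vpd v vn0.
  have -> : qf V v = qf V' v by [].
  have e : v^T *m (u *m u^T) *m v = 0 by rewrite mulmxA -mulmxA uv mulmx0.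
  rewrite {1}/qf decV mulmxDr mulmxDl -scalemxAr -scalemxAl e scaler0 add0r.
  rewrite -/(qf _ v) qf_col block_mxKul block_mxKur block_mxKdl block_mxKdr.
  by rewrite !mulmx0 !mul0mx !add0r.
- move=> w; have := Kpsd (col_mx 0 w : 'cV[R]_(1 + m)).
  have -> : qf K (col_mx 0 w : 'cV[R]_(1 + m)) = qf K' (col_mx 0 w) by [].
  by rewrite qf_col trmx0 !mulmx0 !mul0mx !add0r.
Qed.

Lemma qf1_gt0 m (v : 'cV[R]_m) : v != 0 -> 0 < qf 1%:M v.
Proof.
move=> vn0; rewrite /qf mulmx1 mxE.
case: (pickP (fun i => v i 0 != 0)) => [i vi | h]; last first.
  move: vn0; have -> : v = 0; last by rewrite eqxx.
  by apply/matrixP => i j; rewrite ord1 mxE; move/negbFE/eqP: (h i).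
rewrite (bigD1 i) //= mxE ltr_wpDr //.
  by apply: sumr_ge0 => j _; rewrite mxE -expr2 sqr_ge0.
by rewrite lt0r mulf_neq0 //= -expr2 sqr_ge0.
Qed.

Lemma qfD m (A B : 'M[R]_m) v : qf (A + B) v = qf A v + qf B v.
Proof. by rewrite /qf mulmxDr mulmxDl mxE. Qed.

Lemma qfZ m (A : 'M[R]_m) c v : qf (c *: A) v = c * qf A v.
Proof. by rewrite /qf -scalemxAr -scalemxAl mxE. Qed.

Lemma tr_psd m (V K : 'M[R]_m) :
  V^T = V -> (forall v, 0 <= qf V v) -> (forall v, 0 <= qf K v) ->
  0 <= \tr (V *m K).
Proof.
move=> Vs Vpsd Kpsd.
have trK : 0 <= \tr K.
  rewrite -(mul1mx K); apply: tr_pd => //; first by rewrite trmx1.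
  exact: qf1_gt0.
have H d : 0 < d -> 0 <= \tr (V *m K) + d * \tr K.
  move=> d0; rewrite -mxtraceZ -mxtraceD.
  have -> : V *m K + d *: K = (V + d%:M) *m K by rewrite mulmxDl mul_scalar_mx.
  apply: tr_pd => //.
    by rewrite raddfD /= tr_scalar_mx Vs.
  move=> v vn0; rewrite -scalemx1 qfD qfZ ltr_wpDl //.
  by rewrite mulr_gt0 // qf1_gt0.
rewrite leNgt; apply/negP => neg.
have := H (- \tr (V *m K) / (\tr K + 1)).
have tK1 : 0 < \tr K + 1 by rewrite ltr_wpDl.
rewrite divr_gt0 ?oppr_gt0 // => /(_ isT).
set t := \tr (V *m K); set k := \tr K.
have -> : t + - t / (k + 1) * k = t / (k + 1).
  by field; rewrite gt_eqF.
by rewrite pmulr_lge0 ?invr_gt0 // leNgt neg.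
Qed.
End LA.

Local Open Scope classical_set_scope.
Import numFieldNormedType.Exports.

Lemma tr_gen (R : realType) m (X V H : 'M[R]_m) :
  psd_mx V -> pd_mx H -> 0 <= \tr (X *m V *m X^T *m H).
Proof.
move=> [Vs Vpsd] [Hs Hpd].
rewrite -!mulmxA mxtrace_mulC -!mulmxA.
apply: tr_psd => // v.
rewrite /qf !mulmxA -trmx_mul -mulmxA.
have [->|nz] := eqVneq (X *m v) 0; first by rewrite mulmx0 mxE.
exact/ltW/Hpd.
Qed.

Theorem mainTheorem4 (R : realType) (n : nat) (g : group_choice)
    (V H : 'M[R]_(n + n)) :
  (1 <= n)%N -> psd_mx V -> pd_mx H ->
  trace_inf g (V + eps%:M) H @[eps --> (0 : R)^'+] --> (trace_inf g V H : R^o).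
Proof.
move=> _ Vp Hp.
pose t0 (X : 'M[R]_(n + n)) := \tr (X *m V *m X^T *m H).
pose t1 (X : 'M[R]_(n + n)) := \tr (X *m X^T *m H).
have t0ge X : 0 <= t0 X by apply: tr_gen.
have t1ge (X : 'M[R]_(n + n)) : 0 <= t1 X.
  rewrite /t1 -{1}(mulmx1 X); apply: tr_gen => //.
  split; first by rewrite trmx1.
  by move=> v; rewrite /qf mulmx1 mxE; apply: sumr_ge0 => j _; rewrite mxE -expr2 sqr_ge0.
have expand e X : \tr (X *m (V + e%:M) *m X^T *m H) = t0 X + e * t1 X.
  by rewrite mulmxDr mul_mx_scalar !mulmxDl -!scalemxAl mxtraceD mxtraceZ.
have G1 : @G_set R g n (1%:M : 'M[R]_(n + n)).
  by case: g => /=; rewrite /SL_set /Sp_set /= ?det1 ?trmx1 ?mul1mx ?mulmx1.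
rewrite /trace_inf.
set S0 := [set \tr (X *m V *m X^T *m H) | X in @G_set R g n].
set f0 := inf S0.
have S0n : S0 !=set0 by exists (t0 1%:M), 1%:M.
have S0lb : has_lbound S0 by exists 0 => _ [X _ <-]; apply: t0ge.
apply/cvgrPdist_lt => eps eps0.
have eps20 : 0 < eps / 2 by rewrite divr_gt0.
have xlt : f0 < f0 + eps / 2 by rewrite ltrDl.
have [_ [X GX <-] X0] := inf_lt S0n xlt.
pose d := eps / 2 / (t1 X + 1).
have t11 : 0 < t1 X + 1 by rewrite ltr_wpDl.
have d0 : 0 < d by rewrite divr_gt0.
have dt : d * t1 X + d = eps / 2.
  by rewrite /d; field; rewrite gt_eqF.
near=> e.
have e0 : 0 < e by near: e; exact: nbhs_right_gt.
have ed : e < d by near: e; exact: nbhs_right_lt.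
set Se := [set \tr (X *m (V + e%:M) *m X^T *m H) | X in @G_set R g n].
have Sen : Se !=set0 by exists (\tr (1%:M *m (V + e%:M) *m 1%:M^T *m H)), 1%:M.
have Selb : has_lbound Se.
  exists 0 => _ [Y _ <-]; rewrite expand; apply: addr_ge0 => //.
  by rewrite mulr_ge0 // ltW.
have le1 : f0 <= inf Se.
  apply: lb_le_inf => // _ [Y GY <-]; rewrite expand.
  apply: (le_trans (ge_inf S0lb _)); first by exists Y.
  by rewrite lerDl mulr_ge0 // ltW.
have le2 : inf Se <= t0 X + e * t1 X.
  by rewrite -expand; apply: ge_inf => //; exists X.
have le3 : e * t1 X <= d * t1 X by rewrite ler_wpM2r // ltW.
rewrite distrC ger0_norm ?subr_ge0 //.
rewrite /t0 in X0 le2.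
set t0X := \tr (X *m V *m X^T *m H) in X0 le2.
set a := e * t1 X in le2 le3.
set b := d * t1 X in le3 dt.
lra.
Unshelve. all: by end_near.
Qed.
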